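(* Let $\Sigma$ be a real symmetric positive definite $n\times n$ matrix, and let \[{\operatorname{mr}}_+(\Sigma)=\min\{\operatorname{rank}(\hat\Sigma)\mid \Sigma=\tilde\Sigma+\hat\Sigma,\ \tilde\Sigma\ge 0,\ \hat\Sigma\ge 0,\ \tilde\Sigma\text{ diagonal}\}.\] Then \[{\operatorname{mr}}_+(\Sigma)\ge\min\{\operatorname{trace}(\Sigma^{-1}(\Sigma-D))\mid D\text{ real diagonal},\ \Sigma\ge D\ge 0\}.\]
   Context: $M\ge 0$ means $M$ is positive semidefinite and $A\ge B$ means $A-B\ge0$; all matrices are real symmetric $n\times n$. *)

(* Defs.v *)
From HB Require Import structures.
From mathcomp Require Import all_boot all_order all_algebra.
From mathcomp Require Import reals.
Set Implicit Arguments. Unset Strict Implicit. Unset Printing Implicit Defensive.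
Import Order.TTheory GRing.Theory Num.Theory.
Local Open Scope ring_scope.

Definition psd (R : realType) (n : nat) (M : 'M[R]_n) : Prop :=
  M^T = M /\ forall x : 'cV[R]_n, 0 <= (x^T *m M *m x) 0 0.

Definition posdef (R : realType) (n : nat) (M : 'M[R]_n) : Prop :=
  M^T = M /\ forall x : 'cV[R]_n, x != 0 -> 0 < (x^T *m M *m x) 0 0.

Definition psd_le (R : realType) (n : nat) (B A : 'M[R]_n) : Prop :=
  psd (A - B).

(* Main.v *)
Require Import Defs.
From HB Require Import structures.
From mathcomp Require Import all_boot all_order all_algebra.
From mathcomp Require Import reals.
Import Order.TTheory GRing.Theory Num.Theory.
Local Open Scope ring_scope.

From mathcomp Require Import ring lra.
Section S.
Variable R : realType.
Variable n : nat.
Implicit Types A B S : 'M[R]_n.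
Implicit Types x y z u : 'cV[R]_n.

Definition bf A x y : R := (x^T *m A *m y) 0 0.

Lemma bfDl A x y z : bf A (x + y) z = bf A x z + bf A y z.
Proof. by rewrite /bf linearD /= !mulmxDl mxE. Qed.
Lemma bfDr A x y z : bf A z (x + y) = bf A z x + bf A z y.
Proof. by rewrite /bf !mulmxDr mxE. Qed.
Lemma bfZl A c x y : bf A (c *: x) y = c * bf A x y.
Proof. by rewrite /bf linearZ /= -!scalemxAl mxE. Qed.
Lemma bfZr A c x y : bf A x (c *: y) = c * bf A x y.
Proof. by rewrite /bf -!scalemxAr mxE. Qed.
Lemma bfNl A x y : bf A (- x) y = - bf A x y.
Proof. by rewrite -scaleN1r bfZl mulN1r. Qed.
Lemma bfNr A x y : bf A x (- y) = - bf A x y.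
Proof. by rewrite -scaleN1r bfZr mulN1r. Qed.
Lemma bfD A B x y : bf (A + B) x y = bf A x y + bf B x y.
Proof. by rewrite /bf mulmxDr mulmxDl mxE. Qed.
Lemma bfN A x y : bf (- A) x y = - bf A x y.
Proof. by rewrite /bf mulmxN mulNmx mxE. Qed.
Lemma bfB A B x y : bf (A - B) x y = bf A x y - bf B x y.
Proof. by rewrite bfD bfN. Qed.
Lemma bfZ A c x y : bf (c *: A) x y = c * bf A x y.
Proof. by rewrite /bf -scalemxAr -scalemxAl mxE. Qed.

Lemma entry_tr (M : 'M[R]_1) : M^T 0 0 = M 0 0.
Proof. by rewrite mxE. Qed.

Lemma dotC x y : (x^T *m y) 0 0 = (y^T *m x) 0 0.
Proof. by rewrite -entry_tr trmx_mul trmxK. Qed.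

Lemma bf_sym A x y : A^T = A -> bf A x y = bf A y x.
Proof. by move=> sA; rewrite /bf -entry_tr !trmx_mul trmxK sA mulmxA. Qed.

Lemma bf_uu u x y : bf (u *m u^T) x y = (x^T *m u) 0 0 * (u^T *m y) 0 0.
Proof. by rewrite /bf !mulmxA -(mulmxA _ u^T) [in LHS]mxE big_ord1. Qed.

Lemma bf_delta A (k l : 'I_n) : bf A (delta_mx k 0) (delta_mx l 0) = A k l.
Proof. by rewrite /bf trmx_delta -rowE -colE !mxE. Qed.

Lemma psd_add A B : psd A -> psd B -> psd (A + B).
Proof.
move=> [sA pA] [sB pB]; split; first by rewrite linearD /= sA sB.
move=> x; have h1 := pA x; have h2 := pB x; change (0 <= bf (A + B) x x); rewrite bfD; rewrite /bf in h1 h2 *; lra.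
Qed.

Lemma psd_uu c u : 0 <= c -> psd (c *: (u *m u^T)).
Proof.
move=> c0; split; first by rewrite linearZ /= trmx_mul trmxK.
move=> x; change (0 <= bf (c *: (u *m u^T)) x x); rewrite bfZ bf_uu dotC.
by apply: mulr_ge0 => //; rewrite -expr2 sqr_ge0.
Qed.

Lemma posdef_psd S : posdef S -> psd S.
Proof.
move=> [sS pS]; split=> // x; have [->|nz] := eqVneq x 0.
  by rewrite mulmx0 mxE.
exact: ltW (pS x nz).
Qed.

Lemma posdef_unit S : posdef S -> S \in unitmx.
Proof.
move=> [sS pS]; rewrite unitmxE unitfE; apply/negP => /det0P [v vnz vS].
have : v^T != 0 by apply: contra vnz => /eqP/(congr1 trmx); rewrite trmxK trmx0 => ->.
move=> /pS; by rewrite trmxK vS mul0mx mxE ltxx.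
Qed.

Lemma tr1 (M : 'M[R]_1) : \tr M = M 0 0.
Proof. by rewrite /mxtrace big_ord1. Qed.

Lemma rank_one S c u : posdef S -> 0 <= c -> psd (S - c *: (u *m u^T)) ->
  \tr (invmx S *m (c *: (u *m u^T))) <= 1.
Proof.
move=> pdS c0 [_ pp]; have Su := posdef_unit _ pdS.
have [_ pS] := posdef_psd _ pdS.
set z := invmx S *m u.
have Sz : S *m z = u by rewrite /z mulmxA mulmxV // mul1mx.
have e1 : \tr (invmx S *m (c *: (u *m u^T))) = c * (u^T *m z) 0 0.
  by rewrite -scalemxAr mxtraceZ mulmxA mxtrace_mulC tr1.
have e2 : bf S z z = (u^T *m z) 0 0 by rewrite /bf -mulmxA Sz dotC.
have := pp z; have := pS z; rewrite -!/(bf _ _ _) bfB bfZ bf_uu e2 [(z^T *m u) 0 0]dotC e1.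
set m := (u^T *m z) 0 0 => h1 h2. nra.
Qed.

Lemma psd_diag0 A : psd A -> (forall i, A i i = 0) -> A = 0.
Proof.
move=> [sA pA] d0; apply/matrixP => i j; rewrite mxE.
pose x := (- A i j) *: delta_mx i 0 + delta_mx j 0 : 'cV[R]_n.
have := pA x; rewrite -/(bf _ _ _) /x bfDl !bfDr !bfZl !bfZr !bf_delta !d0.
have sij : A j i = A i j by rewrite -[in LHS]sA mxE.
rewrite sij => h.
have : A i j ^+ 2 <= 0 by nra.
by move=> h'; apply/eqP; rewrite -sqrf_eq0 eq_le h' sqr_ge0.
Qed.

Lemma key S k : posdef S -> forall A, (\rank A <= k)%N -> psd A -> psd (S - A) ->
  \tr (invmx S *m A) <= (\rank A)%:R.
Proof.
move=> pdS; elim: k => [|k IH] A rk pA pSA.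
  have : \rank A = 0%N by apply/eqP; rewrite -leqn0.
  by move/eqP; rewrite mxrank_eq0 => /eqP ->; rewrite mulmx0 mxtrace0.
have [A0|] := eqVneq A 0.
  by rewrite A0 mulmx0 mxtrace0 ler0n.
move=> Anz.
have [/existsP [i ai] | /existsPn h] := boolP [exists i, A i i != 0]; last first.
  by move/eqP: Anz; case; apply: psd_diag0 => // i; apply/eqP; have := h i; rewrite negbK.
case: (pA) => sA qA.
set a := A i i.
have a0 : 0 < a.
  by rewrite lt0r ai /a -bf_delta; exact: qA.
set e := delta_mx i 0 : 'cV[R]_n.
set u := A *m e.
have uT : u^T = e^T *m A by rewrite /u trmx_mul sA.
set A' := A - a^-1 *: (u *m u^T).
have AA' : A = A' + a^-1 *: (u *m u^T) by rewrite /A' subrK.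
have pA' : psd A'.
  split; first by rewrite /A' linearB /= sA linearZ /= trmx_mul trmxK.
  move=> x; change (0 <= bf A' x x).
  set t := bf A x e.
  have : 0 <= bf A (x - (t / a) *: e) (x - (t / a) *: e) by apply: qA.
  rewrite bfDl !bfDr !bfNl !bfNr !bfZl !bfZr /A' bfB bfZ bf_uu.
  have -> : (x^T *m u) 0 0 = t by rewrite /u /t /bf mulmxA.
  have -> : (u^T *m x) 0 0 = t by rewrite dotC /u /t /bf mulmxA.
  rewrite (bf_sym _ e x sA) -/t /e bf_delta -/a => h.
  apply: (le_trans h); rewrite le_eqVlt; apply/orP; left; apply/eqP.
  by field; rewrite gt_eqF.
have pSA' : psd (S - A').
  have -> : S - A' = (S - A) + a^-1 *: (u *m u^T).
    by rewrite /A' opprB addrA addrAC.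
  by apply: psd_add => //; apply: psd_uu; rewrite invr_ge0 ltW.
have ua : (u^T *m e) 0 0 = a by rewrite uT; exact: bf_delta.
have rk' : (\rank A' < \rank A)%N.
  apply: rank_ltmx; rewrite ltmxE; apply/andP; split.
    have -> : A' = (1%:M - a^-1 *: (u *m e^T)) *m A.
      by rewrite /A' mulmxBl mul1mx uT scalemxAl !mulmxA -scalemxAl.
    exact: submxMl.
  apply/negP => /submxP [D DA].
  have col0 : A' *m e = 0.
    rewrite /A' mulmxBl -scalemxAl -mulmxA [u^T *m e]mx11_scalar ua.
    by rewrite mul_mx_scalar scalerA mulVf ?gt_eqF // scale1r subrr.
  have : (A *m e) i 0 = 0 by rewrite DA -mulmxA col0 mulmx0 mxE.
  by rewrite /e -colE mxE; apply/eqP.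
have tr : \tr (invmx S *m A) = \tr (invmx S *m A') + \tr (invmx S *m (a^-1 *: (u *m u^T))).
  by rewrite {1}AA' mulmxDr mxtraceD.
have h1 := IH A' (leq_trans (leq_trans rk' rk) (leqnn _)) pA' pSA'.
have pS1 : psd (S - a^-1 *: (u *m u^T)).
  have -> : S - a^-1 *: (u *m u^T) = (S - A) + A'.
    by rewrite /A' addrA subrK.
  exact: psd_add.

rewrite tr; apply: le_trans (lerD h1 _) _.
  apply: rank_one => //; by rewrite invr_ge0 ltW.
by rewrite natr1 ler_nat.
Qed.
End S.

(* mr_+(Sigma) >= min{ tr(Sigma^-1 (Sigma - D)) | D diag, Sigma >= D >= 0 },
   written out: for every admissible decomposition Sigma = St + Sh (whose
   minimal rank Sh is mr_+), some admissible D has trace <= rank Sh. *)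
Theorem proposition9 (R : realType) (n : nat) (Sigma : 'M[R]_n) :
  posdef Sigma ->
  forall St Sh : 'M[R]_n,
    Sigma = St + Sh -> psd St -> psd Sh -> is_diag_mx St ->
    exists D : 'M[R]_n,
      [/\ is_diag_mx D, psd_le D Sigma, psd D &
          \tr (invmx Sigma *m (Sigma - D)) <= (\rank Sh)%:R].
Proof.
move=> pdS St Sh E pSt pSh dSt.
have hSh : Sigma - St = Sh by rewrite E addrC addKr.
exists St; split => //.
  by rewrite /psd_le hSh.
rewrite hSh; apply: (@key R n Sigma (\rank Sh) pdS Sh (leqnn _)) => //.
by rewrite E addrK.
Qed.
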